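(* Let $p$ be a prime and $t\in\mathbb Z/(p)$ nonzero, and let $j_0,\dots,j_{p-1}\in\mathbb Z/(p)$ (indices read in $\mathbb Z/(p)$) satisfy $j_i=j_{-i}$ and $j_{t^s i}=t^s j_i-(t^s-1)j_0$ for all $i\in\mathbb Z/(p)$, $s\in\mathbb Z$, with $j_i\ne j_k$ for some $i\ne k$. Then the multiplicative order of $t$ in $(\mathbb Z/(p))^\times$ is odd. *)

(* Defs.v *)
From HB Require Import structures.
From mathcomp Require Import all_boot all_order all_algebra all_fingroup.
Set Implicit Arguments. Unset Strict Implicit. Unset Printing Implicit Defensive.

(* Main.v *)
Require Import Defs.
From HB Require Import structures.
From mathcomp Require Import all_boot all_order all_algebra all_fingroup.
From mathcomp Require Import ring cyclic.
Import GRing.Theory.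
Local Open Scope ring_scope.

Theorem mainTheorem11 (p : nat) (Hp : prime p) (t : {unit 'F_p})
  (j : 'F_p -> 'F_p)
  (Hsym : forall i : 'F_p, j i = j (- i))
  (Hact : forall (i : 'F_p) (s : int),
      j ((val t) ^ s * i) = (val t) ^ s * j i - ((val t) ^ s - 1) * j 0)
  (Hnc : exists i k : 'F_p, i != k /\ j i != j k) :
  odd #[t]%g.
Proof.
apply/negPn/negP => Hev.
have n0 := order_gt0 t.
set n := #[t]%g in n0 Hev.
have Hn : n = (n./2).*2 by rewrite -{1}(odd_double_half n) (negbTE Hev).
set m := n./2 in Hn.
have m0 : (0 < m)%N by move: n0; rewrite Hn double_gt0.
have mn : (m < n)%N by rewrite Hn -addnn -{1}(addn0 m) ltn_add2l.
set x := val t ^+ m.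
have x2 : x * x = 1.
  rewrite /x -exprD addnn -Hn -FinRing.val_unitX.
  by rewrite /n expg_order.
have xn1 : x != 1.
  apply/negP => /eqP x1.
  have : (n %| m)%N.
    rewrite /n order_dvdn; apply/eqP; apply: val_inj.
    by rewrite FinRing.val_unitX.
  by move/(dvdn_leq m0); rewrite leqNgt mn.
have xm1 : x = -1.
  have : (x - 1) * (x + 1) = 0.
    have -> : (x - 1) * (x + 1) = x * x - 1 by ring.
    by rewrite x2 subrr.
  move/eqP; rewrite mulf_eq0 subr_eq0 (negbTE xn1) /= addr_eq0 => /eqP //.
have H2 : (1 + 1 : 'F_p) != 0.
  by rewrite addr_eq0 -xm1 eq_sym.
have key : forall i, j i = j 0.
  move=> i; have : j (x * i) = x * j i - (x - 1) * j 0 := Hact i (Posz m).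
  rewrite xm1 !mulN1r -Hsym => E.
  apply/eqP; rewrite -subr_eq0.
  have : (1 + 1) * (j i - j 0) = 0.
    have -> : (1 + 1) * (j i - j 0) = j i - (- j i - (-1 - 1) * j 0) by ring.
    by rewrite {1}E subrr.
  by move/eqP; rewrite mulf_eq0 (negbTE H2).
case: Hnc => i [k [_ H]].
move/eqP: H; apply.
exact: (etrans (key i) (esym (key k))).
Qed.
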